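(* Let $k\ge 2$ and $D=\{1,\dots,k\}$. Each of the following cost functions on $D$ has a $k$-submodular discrete relaxation on the domain $\{0,1,\dots,k\}$: (1) any unary function $f:D\to\mathbb{R}$; (2) the soft version of the constraint $(x=\pi(y))$, for any permutation $\pi$ of $D$; (3) the soft version of the constraint $(x=d\lor y=d')$, for $d,d'\in D$; (4) the soft version of the constraint $(x_1=\dots=x_r)$, for any $r$. The scaling factor in all cases is $2$.
   Context: The soft version of a relation $R$ is the cost function taking value $0$ on tuples in $R$ and $1$ otherwise. A discrete relaxation of $f:D^r\to\mathbb{R}$ on $D'\supset D$ is $f':(D')^r\to\mathbb{R}$ with $\min f'=\min f$ and $f'=f$ on $D^r$. The scaling factor is the smallest rational $c$ such that $c\cdot f'$ is integral (for integer-valued $f$). With $\sqcap,\sqcup$ on $\{0,\dots,k\}$ given by $0\sqcap x=0$, $0\sqcup x=x$, $x\sqcap x=x\sqcup x=x$ and $x\sqcap y=x\sqcup y=0$ for distinct nonzero $x,y$, a function $f'$ is $k$-submodular if $f'(X)+f'(Y)\ge f'(X\sqcap Y)+f'(X\sqcup Y)$ for all $X,Y$, coordinatewise. *)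

(* Defs.v *)
From HB Require Import structures.
From mathcomp Require Import all_boot all_order all_fingroup all_algebra.
Set Implicit Arguments. Unset Strict Implicit. Unset Printing Implicit Defensive.
Import Order.TTheory GRing.Theory Num.Theory.
Local Open Scope ring_scope.

(* Conventions: D = {1,...,k} is encoded as 'I_k (d : 'I_k stands for d+1);
   the extended domain D' = {0,1,...,k} is 'I_k.+1, with ord0 playing 0.
   The embedding D -> D' is lift ord0 (value d ↦ d+1). *)

Definition embD (k : nat) (d : 'I_k) : 'I_k.+1 := lift ord0 d.

Definition embT (k r : nat) (x : {ffun 'I_r -> 'I_k}) : {ffun 'I_r -> 'I_k.+1} :=
  [ffun i => embD (x i)].

Definition kmeet (k : nat) (x y : 'I_k.+1) : 'I_k.+1 :=
  if x == y then x else ord0.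
Definition kjoin (k : nat) (x y : 'I_k.+1) : 'I_k.+1 :=
  if x == ord0 then y else if y == ord0 then x else if x == y then x else ord0.

Definition ksubmodular (R : numDomainType) (k r : nat)
    (g : {ffun 'I_r -> 'I_k.+1} -> R) : Prop :=
  forall X Y : {ffun 'I_r -> 'I_k.+1},
    g [ffun i => kmeet (X i) (Y i)] + g [ffun i => kjoin (X i) (Y i)]
      <= g X + g Y.

(* f' is a discrete relaxation of f on D' : agrees with f on D^r and
   min f' = min f (as f' extends f, min f' <= min f is automatic; the other
   inequality says every value of f' is bounded below by some value of f). *)
Definition discrete_relaxation (R : numDomainType) (k r : nat)
    (f : {ffun 'I_r -> 'I_k} -> R) (f' : {ffun 'I_r -> 'I_k.+1} -> R) : Prop :=
  (forall x, f' (embT x) = f x) /\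
  (forall X, exists x, f x <= f' X).

Definition soft (R : numDomainType) (T : Type) (P : T -> bool) : T -> R :=
  fun x => if P x then 0 else 1.

(* existence of a k-submodular relaxation with scaling factor (at most) 2:
   whenever f is integer-valued, 2 * f' is integer-valued *)
Definition has_ksub_relax2 (R : archiRealFieldType) (k r : nat)
    (f : {ffun 'I_r -> 'I_k} -> R) : Prop :=
  exists f' : {ffun 'I_r -> 'I_k.+1} -> R,
    [/\ discrete_relaxation f f', ksubmodular f' &
        ((forall x, f x \is a Num.int) -> forall X, 2 * f' X \is a Num.int)].

(* Main.v *)
Require Import Defs.
From HB Require Import structures.
From mathcomp Require Import all_boot all_order all_fingroup all_algebra.
From mathcomp Require Import lra.
Import Order.TTheory GRing.Theory Num.Theory.
Local Open Scope ring_scope.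

Lemma int_half (R : archiRealFieldType) (x : R) :
  x = 0 \/ x = 2^-1 \/ x = 1 -> 2 * x \is a Num.int.
Proof.
case=> [->|[->|->]]; first by rewrite mulr0 rpred0.
  by rewrite mulfV ?pnatr_eq0 // int_num1.
by rewrite mulr1 natr_int.
Qed.

Lemma ksub_transfer (R : numDomainType) k r (s : 'I_r -> 'I_k.+1 -> 'I_k.+1)
  (Hs : forall i, injective (s i)) (H0 : forall i, s i ord0 = ord0)
  (g : {ffun 'I_r -> 'I_k.+1} -> R) :
  ksubmodular g -> ksubmodular (fun X => g [ffun i => s i (X i)]).
Proof.
move=> Hg X Y /=.
have e0 : forall i x, (s i x == ord0) = (x == ord0).
  by move=> i x; rewrite -{1}(H0 i) (inj_eq (Hs i)).
have eM : [ffun i => s i ([ffun i => kmeet (X i) (Y i)] i)] =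
   [ffun i => kmeet ([ffun i => s i (X i)] i) ([ffun i => s i (Y i)] i)].
  apply/ffunP => i; rewrite !ffunE /kmeet (fun_if (s i)) H0 (inj_eq (Hs i)) //.
have eJ : [ffun i => s i ([ffun i => kjoin (X i) (Y i)] i)] =
   [ffun i => kjoin ([ffun i => s i (X i)] i) ([ffun i => s i (Y i)] i)].
  apply/ffunP => i; rewrite !ffunE /kjoin !(fun_if (s i)) H0 !e0 (inj_eq (Hs i)) //.
by rewrite eM eJ; apply: Hg.
Qed.

Lemma min_cond (R : numDomainType) k r (f : {ffun 'I_r -> 'I_k} -> R) (f' : {ffun 'I_r -> 'I_k.+1} -> R) x0 :
  f x0 <= 0 -> (forall X, 0 <= f' X) -> forall X, exists x, f x <= f' X.
Proof. by move=> h h' X; exists x0; apply: le_trans h (h' X). Qed.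

Ltac atom t := first [ is_var t | match t with ord0 => idtac end ].
Ltac brute := repeat (match goal with
  | |- context [ ?a == ?b ] => atom a; atom b; case: (@eqP _ a b) => ?; try subst
 end; rewrite /= ?eqxx).

Lemma part1 (R : archiRealFieldType) (k : nat) (hk : (2 <= k)%N) (f : 'I_k -> R) :
  has_ksub_relax2 (fun x : {ffun 'I_1 -> 'I_k} => f (x ord0)).
Proof.
pose d0 : 'I_k := Ordinal (ltnW hk).
have [dm _ Hdm] : exists2 dm, true & forall d, f dm <= f d.
  case: (@arg_minP _ R _ d0 predT f) => // i _ H; exists i => //.
  by move=> d; apply: H.
pose u (c : 'I_k.+1) := odflt d0 (unlift ord0 c).
exists (fun X => if X ord0 == ord0 then f dm else f (u (X ord0))); split.
- split.
  + move=> x; rewrite /embT ffunE /embD eq_sym (negbTE (neq_lift _ _)) /u liftK //.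
  + move=> X; case: eqP => _.
      by exists [ffun _ => dm]; rewrite ffunE.
    by exists [ffun _ => u (X ord0)]; rewrite ffunE.
- move=> X Y; rewrite !ffunE /kmeet /kjoin.
  have h1 := Hdm (u (X ord0)); have h2 := Hdm (u (Y ord0)).
  move: h1 h2; move: (X ord0) (Y ord0) => a b h1 h2.
  brute; lra.
- move=> H X.
  have Hd : forall d, f d \is a Num.int.
    by move=> d; have := H [ffun _ => d]; rewrite ffunE.
  by case: ifP => _; apply: rpredM; rewrite ?natr_int ?Hd.
Qed.
Set Implicit Arguments. Unset Strict Implicit.

Definition conf k r (X : {ffun 'I_r -> 'I_k.+1}) :=
  [exists i, exists j, [&& X i != ord0, X j != ord0 & X i != X j]].
Definition full k r (X : {ffun 'I_r -> 'I_k.+1}) := [forall i, X i != ord0].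
Definition zer k r (X : {ffun 'I_r -> 'I_k.+1}) := [forall i, X i == ord0].
Definition g4 (R : numDomainType) k r (X : {ffun 'I_r -> 'I_k.+1}) : R :=
  if conf X then 1 else if full X || zer X then 0 else 2^-1.

Lemma g4_cases (R : archiRealFieldType) k r (X : {ffun 'I_r -> 'I_k.+1}) :
  @g4 R k r X = 0 \/ @g4 R k r X = 2^-1 \/ @g4 R k r X = 1.
Proof.
rewrite /g4; case: (conf X); first by right; right.
by case: (_ || _); [left|right; left].
Qed.

Lemma g4_ge0 (R : archiRealFieldType) k r X : 0 <= @g4 R k r X.
Proof. by case: (g4_cases R X) => [->|[->|->]]; lra. Qed.

Lemma g4_le1 (R : archiRealFieldType) k r X : @g4 R k r X <= 1.
Proof. by case: (g4_cases R X) => [->|[->|->]]; lra. Qed.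

Lemma g4_nc (R : archiRealFieldType) k r X : ~~ conf X -> @g4 R k r X <= 2^-1.
Proof. by rewrite /g4 => /negbTE ->; case: ifP => _; lra. Qed.

Lemma nc_sub k r (X Y : {ffun 'I_r -> 'I_k.+1}) :
  (forall i, X i != ord0 -> X i = Y i) -> ~~ conf Y -> ~~ conf X.
Proof.
move=> H; apply: contra => /existsP[i /existsP[j /and3P[hi hj hij]]].
apply/existsP; exists i; apply/existsP; exists j.
by rewrite -(H i hi) -(H j hj) hi hj hij.
Qed.

Lemma nc_const k r (X : {ffun 'I_r -> 'I_k.+1}) a :
  (forall i, X i != ord0 -> X i = a) -> ~~ conf X.
Proof.
move=> H; apply/existsPn => i; apply/existsPn => j.
by apply/and3P => -[hi hj]; rewrite (H i hi) (H j hj) eqxx.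
Qed.

Lemma ncP k r (X : {ffun 'I_r -> 'I_k.+1}) i j :
  ~~ conf X -> X i != ord0 -> X j != ord0 -> X i = X j.
Proof.
move=> /existsPn /(_ i) /existsPn /(_ j) h hi hj.
by apply/eqP; move: h; rewrite hi hj /= negbK.
Qed.

Lemma g4_zer (R : archiRealFieldType) k r X : zer X -> @g4 R k r X = 0.
Proof.
move=> hz; rewrite /g4 hz orbT; case: ifP => // /existsP[i /existsP[j /and3P[hi]]].
by move/forallP: hz => /(_ i); rewrite (negbTE hi).
Qed.

Lemma kmeetC k (x y : 'I_k.+1) : kmeet x y = kmeet y x.
Proof. by rewrite /kmeet eq_sym; case: eqP => // ->. Qed.

Lemma kjoinC k (x y : 'I_k.+1) : kjoin x y = kjoin y x.
Proof.
by rewrite /kjoin; brute; congruence.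
Qed.

Lemma join_nz_r k (x y : 'I_k.+1) : y != ord0 -> kjoin x y != ord0 -> kjoin x y = y.
Proof.
by rewrite /kjoin; brute; congruence.
Qed.

Lemma meet_nz k (x y : 'I_k.+1) : kmeet x y != ord0 -> kmeet x y = x /\ x = y.
Proof. by rewrite /kmeet; brute. Qed.

Lemma g4_sub_aux (R : archiRealFieldType) k r (X Y : {ffun 'I_r -> 'I_k.+1}) :
  ~~ conf Y || conf X ->
  @g4 R k r [ffun i => kmeet (X i) (Y i)] + @g4 R k r [ffun i => kjoin (X i) (Y i)]
    <= g4 R X + g4 R Y.
Proof.
move=> hpre; set M := [ffun i => _]; set J := [ffun i => _].
have hM : forall i, M i = kmeet (X i) (Y i) by move=> i; rewrite ffunE.
have hJ : forall i, J i = kjoin (X i) (Y i) by move=> i; rewrite ffunE.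
have ncM : ~~ conf Y -> ~~ conf M.
  apply: nc_sub => i; rewrite hM => /meet_nz[-> //].
have a1 := g4_le1 R M; have a2 := g4_le1 R J; have a3 := g4_ge0 R M; have a4 := g4_ge0 R J.
case cX: (conf X); case cY: (conf Y); move: hpre; rewrite ?cX ?cY //= => _.
- rewrite [g4 R X]/g4 [g4 R Y]/g4 cX cY; lra.
- have gX : g4 R X = 1 by rewrite [g4 R X]/g4 cX.
  have := g4_nc R (ncM ltac:(by rewrite cY)) => gM.
  case: (g4_cases R Y) => [gY|[gY|gY]]; last by move: gY; rewrite [g4 R Y]/g4 cY; case: ifP => _; lra.
  + move: gY; rewrite [g4 R Y]/g4 cY; case: ifP => [/orP[fY|zY] _|_ ?]; last by lra.
    * have gJ : g4 R J <= 2^-1.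
        apply: g4_nc; apply: (@nc_sub _ _ J Y) => [i|]; last by rewrite cY.
        by rewrite hJ; apply: join_nz_r; move/forallP: fY.
      by rewrite gX; lra.
    * have zM : zer M.
        by apply/forallP => i; rewrite hM /kmeet (eqP (forallP zY i)); case: ifP.
      by rewrite (g4_zer R zM) gX; lra.
  + by rewrite gX gY; lra.
-
  case zX: (zer X).
    have eM : M = X.
      by apply/ffunP => i; rewrite hM /kmeet (eqP (forallP zX i)); case: ifP.
    have eJ : J = Y.
      by apply/ffunP => i; rewrite hJ /kjoin (eqP (forallP zX i)) eqxx.
    by rewrite eM eJ.
  case zY: (zer Y).
    have eM : M = Y.
      apply/ffunP => i; rewrite hM /kmeet (eqP (forallP zY i)).
      by case: eqP.
    have eJ : J = X.
      apply/ffunP => i; rewrite hJ /kjoin (eqP (forallP zY i)) eqxx.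
      by case: eqP.
    by rewrite eM eJ addrC.
  have gX : g4 R X = if full X then 0 else 2^-1 by rewrite [g4 R X]/g4 cX zX orbF.
  have gY : g4 R Y = if full Y then 0 else 2^-1 by rewrite [g4 R Y]/g4 cY zY orbF.
  case: (boolP [exists i, (X i != ord0) && (X i == Y i)]).
  + case/existsP => i0 /andP[h0 /eqP e0].
    have hX : forall i, X i != ord0 -> X i = X i0.
      by move=> i hi; apply: ncP => //; rewrite cX.
    have hY : forall i, Y i != ord0 -> Y i = X i0.
      by move=> i hi; rewrite e0; apply: ncP => //; rewrite ?cY // -e0.
    case fX: (full X).
      have eM : M = Y.
        apply/ffunP => i; rewrite hM /kmeet.
        have xi := hX i (forallP fX i).
        case: (eqVneq (Y i) ord0) => [->|hy].
          by case: eqP.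
        by rewrite xi (hY i hy) eqxx.
      have eJ : J = X.
        apply/ffunP => i; rewrite hJ /kjoin.
        have xi := hX i (forallP fX i).
        rewrite (negbTE (forallP fX i)).
        case: (eqVneq (Y i) ord0) => // hy.
        by rewrite xi (hY i hy) eqxx.
      by rewrite eM eJ addrC.
    case fY: (full Y).
      have eM : M = X.
        apply/ffunP => i; rewrite hM /kmeet.
        have yi := hY i (forallP fY i).
        case: (eqVneq (X i) ord0) => [->|hx].
          by case: eqP.
        by rewrite yi (hX i hx) eqxx.
      have eJ : J = Y.
        apply/ffunP => i; rewrite hJ /kjoin.
        have yi := hY i (forallP fY i).
        rewrite (negbTE (forallP fY i)).
        case: (eqVneq (X i) ord0) => // hx.
        by rewrite yi (hX i hx) eqxx.
      by rewrite eM eJ.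
    have gM : g4 R M <= 2^-1.
      apply: g4_nc; apply: (@nc_const _ _ M (X i0)) => i.
      rewrite hM => hm; have [e1 _] := meet_nz hm; rewrite e1; apply: hX; by rewrite -e1.
    have gJ : g4 R J <= 2^-1.
      apply: g4_nc; apply: (@nc_const _ _ J (X i0)) => i.
      rewrite hJ /kjoin.
      case: (eqVneq (X i) ord0) => [_|hx]; first by apply: hY.
      case: (eqVneq (Y i) ord0) => [_ _|hy]; first by apply: hX.
      case: (eqVneq (X i) (Y i)) => [_ _|]; first by apply: hX.
      by rewrite eqxx.
    by rewrite gX gY fX fY; lra.
  + move=> /existsPn nag.
    have zM : zer M.
      apply/forallP => i; rewrite hM /kmeet; case: (eqVneq (X i) (Y i)) => [e|]; last by [].
      by move: (nag i); rewrite e eqxx andbT negbK.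
    rewrite (g4_zer R zM) add0r gX gY.
    case fX: (full X); case fY: (full Y).
    * have zJ : zer J.
        apply/forallP => i; rewrite hJ /kjoin (negbTE (forallP fX i)) (negbTE (forallP fY i)).
        by have := nag i; rewrite (forallP fX i) /= => /negbTE ->.
      by rewrite (g4_zer R zJ); lra.
    * have : ~~ conf J.
        apply: (@nc_sub _ _ J X) => [i|]; last by rewrite cX.
        by rewrite hJ kjoinC; apply: join_nz_r; move/forallP: fX.
      by move/(g4_nc R); lra.
    * have : ~~ conf J.
        apply: (@nc_sub _ _ J Y) => [i|]; last by rewrite cY.
        by rewrite hJ; apply: join_nz_r; move/forallP: fY.
      by move/(g4_nc R); lra.
    * have := g4_le1 R J; lra.
Qed.

Lemma g4_sub (R : archiRealFieldType) k r : ksubmodular (@g4 R k r).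
Proof.
move=> X Y; case: (boolP (~~ conf Y || conf X)) => h; first exact: g4_sub_aux.
have h' : ~~ conf X || conf Y by move: h; case: (conf X); case: (conf Y).
have := g4_sub_aux R h'.
have eM : [ffun i => kmeet (Y i) (X i)] = [ffun i => kmeet (X i) (Y i)].
  by apply/ffunP => i; rewrite !ffunE kmeetC.
have eJ : [ffun i => kjoin (Y i) (X i)] = [ffun i => kjoin (X i) (Y i)].
  by apply/ffunP => i; rewrite !ffunE kjoinC.
rewrite eM eJ; lra.
Qed.

Lemma g4_emb (R : archiRealFieldType) k r (x : {ffun 'I_r -> 'I_k}) :
  g4 R (embT x) = soft R (fun x : {ffun 'I_r -> 'I_k} => [forall i, forall j, x i == x j]) x.
Proof.
have fx : full (embT x) by apply/forallP => i; rewrite ffunE /embD eq_sym neq_lift.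
have cx : conf (embT x) = ~~ [forall i, forall j, x i == x j].
  rewrite /conf; apply/idP/idP.
  - case/existsP => i /existsP[j /and3P[_ _]].
    rewrite !ffunE /embD (inj_eq (@lift_inj _ ord0)) => h.
    by apply/forallPn; exists i; apply/forallPn; exists j.
  - case/forallPn => i /forallPn[j h]; apply/existsP; exists i; apply/existsP; exists j.
    by rewrite !ffunE /embD !(eq_sym _ ord0) !neq_lift (inj_eq (@lift_inj _ ord0)) h.
by rewrite /g4 cx fx /soft; case: [forall i, _].
Qed.

Lemma part4 (R : archiRealFieldType) (k : nat) (hk : (2 <= k)%N) r :
  has_ksub_relax2 (soft R (fun x : {ffun 'I_r -> 'I_k} => [forall i, forall j, x i == x j])).
Proof.
pose d0 : 'I_k := Ordinal (ltnW hk).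
exists (@g4 R k r); split.
- split; first by move=> x; rewrite g4_emb.
  apply: (@min_cond _ _ _ _ _ [ffun _ => d0]); last by move=> X; apply: g4_ge0.
  rewrite /soft ifT //; apply/forallP => i; apply/forallP => j; rewrite !ffunE //.
- exact: g4_sub.
- by move=> _ X; apply: int_half; apply: g4_cases.
Qed.

Lemma I2 (i : 'I_2) : i = ord0 \/ i = ord_max.
Proof. case: i => [[|[|m]] Hm]; [left|right|by exfalso; move: (Hm); rewrite !ltnS ltn0]; exact: val_inj. Qed.

Lemma eq2 (T : eqType) (y : {ffun 'I_2 -> T}) :
  [forall i, forall j, y i == y j] = (y ord0 == y ord_max).
Proof.
apply/idP/idP => [/forallP/(_ ord0)/forallP/(_ ord_max) //|/eqP h].
have e : forall l : 'I_2, y l = y ord0 by move=> l; case: (I2 l) => ->.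
by apply/forallP => i; apply/forallP => j; rewrite !e.
Qed.

Lemma part2 (R : archiRealFieldType) (k : nat) (hk : (2 <= k)%N) (pi : {perm 'I_k}) :
  has_ksub_relax2
    (soft R (fun x : {ffun 'I_2 -> 'I_k} => x ord0 == pi (x ord_max))).
Proof.
pose d0 : 'I_k := Ordinal (ltnW hk).
pose phat (c : 'I_k.+1) := if unlift ord0 c is Some d then lift ord0 (pi d) else ord0.
pose s (i : 'I_2) (c : 'I_k.+1) := if i == ord0 then c else phat c.
have phat_inj : injective phat.
  move=> c1 c2; rewrite /phat; case: unliftP => [d1 ->|->]; case: unliftP => [d2 ->|->] //.
  by move/lift_inj/perm_inj => ->.
have s_inj : forall i, injective (s i).
  by move=> i; rewrite /s; case: (i == ord0); [move=> x y | exact: phat_inj].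
have s0 : forall i, s i ord0 = ord0.
  by move=> i; rewrite /s; case: ifP => // _; rewrite /phat unlift_none.
exists (fun X => g4 R [ffun i => s i (X i)]); split.
- split.
  + move=> x.
    have -> : [ffun i => s i (embT x i)] =
              embT [ffun i : 'I_2 => if i == ord0 then x ord0 else pi (x ord_max)].
      apply/ffunP => i; rewrite !ffunE /s /embD.
      case: (I2 i) => ->; first by rewrite eqxx.
      by rewrite /= /phat liftK.
    by rewrite g4_emb /soft eq2 !ffunE eqxx.
  + apply: (@min_cond _ _ _ _ _ [ffun i : 'I_2 => if i == ord0 then pi d0 else d0]).
      by rewrite /soft !ffunE eqxx /= eqxx.
    by move=> X; apply: g4_ge0.
- by apply: ksub_transfer => //; apply: g4_sub.
- by move=> _ X; apply: int_half; apply: g4_cases.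
Qed.

Definition g3 (R : numDomainType) k (d d' : 'I_k) (X : {ffun 'I_2 -> 'I_k.+1}) : R :=
  if X ord0 == ord0 then
    (if X ord_max == ord0 then 0 else if X ord_max == embD d' then 0 else 2^-1)
  else if X ord_max == ord0 then (if X ord0 == embD d then 0 else 2^-1)
  else if (X ord0 == embD d) || (X ord_max == embD d') then 0 else 1.

Lemma g3_cases (R : archiRealFieldType) k d d' X :
  @g3 R k d d' X = 0 \/ @g3 R k d d' X = 2^-1 \/ @g3 R k d d' X = 1.
Proof. by rewrite /g3; repeat case: ifP => _; tauto. Qed.

Lemma part3 (R : archiRealFieldType) (k : nat) (hk : (2 <= k)%N) (d d' : 'I_k) :
  has_ksub_relax2
    (soft R (fun x : {ffun 'I_2 -> 'I_k} => (x ord0 == d) || (x ord_max == d'))).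
Proof.
exists (@g3 R k d d'); split.
- split.
  + move=> x; rewrite /g3 /embT !ffunE /embD !(eq_sym _ ord0) !(negbTE (neq_lift _ _)).
    by rewrite !(inj_eq (@lift_inj _ ord0)).
  + apply: (@min_cond _ _ _ _ _ [ffun _ => d]).
      by rewrite /soft !ffunE eqxx.
    by move=> X; case: (g3_cases R d d' X) => [->|[->|->]]; lra.
- move=> X Y; rewrite /g3 !ffunE /kmeet /kjoin.
  move: (neq_lift ord0 d) (neq_lift ord0 d'); rewrite /embD.
  move: (lift ord0 d) (lift ord0 d') (X ord0) (X ord_max) (Y ord0) (Y ord_max).
  move=> D1 D2 a b c e.
  brute; first [done | move=> *; lra | congruence].
- by move=> _ X; apply: int_half; apply: g3_cases.
Qed.

Theorem lemma3 (R : archiRealFieldType) (k : nat) (hk : (2 <= k)%N) :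
  [/\ (* (1) unary functions *)
      (forall f : 'I_k -> R,
         has_ksub_relax2 (fun x : {ffun 'I_1 -> 'I_k} => f (x ord0))),
      (* (2) soft (x = pi y) *)
      (forall pi : {perm 'I_k},
         has_ksub_relax2
           (soft R (fun x : {ffun 'I_2 -> 'I_k} => x ord0 == pi (x ord_max)))),
      (* (3) soft (x = d \/ y = d') *)
      (forall d d' : 'I_k,
         has_ksub_relax2
           (soft R (fun x : {ffun 'I_2 -> 'I_k} =>
                      (x ord0 == d) || (x ord_max == d')))) &
      (* (4) soft (x_1 = ... = x_r) *)
      (forall r : nat,
         has_ksub_relax2
           (soft R (fun x : {ffun 'I_r -> 'I_k} =>
                      [forall i, forall j, x i == x j])))].
Proof.
split; [exact: part1 | exact: part2 | exact: part3 | exact: part4].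
Qed.
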